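(* Let $\mathcal{C}$ be a finite collection of pairwise disjoint closed circular discs in $\mathbb{R}^2$, and let $T_1,\dots,T_m$ be triples of discs from $\mathcal{C}$, each with non-collinear centers, with feasible regions $F_1,\dots,F_m$. Then every point $q\in F_1\cap\cdots\cap F_m$ illuminates all objective arcs of all the triples $T_1,\dots,T_m$: for each $t$ and each point $p$ on an objective arc of a disc of $T_t$, the open segment from $q$ to $p$ does not meet the interior of any disc of $T_t$.
   Context: For two disjoint closed discs $C_a, C_b$ with centers $c_a,c_b$, let $p_a, p_b$ be the points where the segment $\overline{c_ac_b}$ meets the boundary circles of $C_a$ and $C_b$ respectively, and let $l_a, l_b$ be the lines through $p_a$, $p_b$ perpendicular to $\overline{c_ac_b}$. The slab $S_{a,b}$ is the closed region between the parallel lines $l_a$ and $l_b$. For three pairwise disjoint discs $C_i,C_j,C_k$, the feasible region is $S_{i,j}\cap S_{j,k}\cap S_{i,k}$. Objective arcs of a triple $C_i,C_j,C_k$ with non-collinear centers $c_i,c_j,c_k$: on $C_i$, the edges $\overline{c_ic_j}$ and $\overline{c_ic_k}$ meet the boundary circle of $C_i$ in two points, and the objective arc of $C_i$ is the arc between these two points of length less than half the circumference; similarly for $C_j$, $C_k$. *)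

(* Defs.v *)
From Stdlib Require Import Reals List.
Open Scope R_scope.

Definition point := (R * R)%type.

Definition vadd (u v : point) : point := (fst u + fst v, snd u + snd v).
Definition vsub (u v : point) : point := (fst u - fst v, snd u - snd v).
Definition vscale (a : R) (u : point) : point := (a * fst u, a * snd u).
Definition dot (u v : point) : R := fst u * fst v + snd u * snd v.
Definition norm (u : point) : R := sqrt (dot u u).
Definition dist (u v : point) : R := norm (vsub u v).

Record cdisc := mkCDisc { center : point; radius : R }.

Definition in_closed_disc (D : cdisc) (x : point) : Prop := dist x (center D) <= radius D.
Definition in_interior (D : cdisc) (x : point) : Prop := dist x (center D) < radius D.
Definition on_boundary (D : cdisc) (x : point) : Prop := dist x (center D) = radius D.

Definition discs_disjoint (D1 D2 : cdisc) : Prop :=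
  forall x, ~ (in_closed_disc D1 x /\ in_closed_disc D2 x).

(* p_a : the point where segment c_a c_b meets the boundary circle of C_a. *)
Definition contact_point (Da Db : cdisc) : point :=
  vadd (center Da)
       (vscale (radius Da / dist (center Db) (center Da)) (vsub (center Db) (center Da))).

(* The slab S_{a,b}: closed region between the lines through p_a and p_b
   perpendicular to c_a c_b. *)
Definition in_slab (Da Db : cdisc) (x : point) : Prop :=
  let u := vsub (center Db) (center Da) in
  let pa := contact_point Da Db in
  let pb := contact_point Db Da in
  (0 <= dot (vsub x pa) u /\ dot (vsub x pb) u <= 0) \/
  (dot (vsub x pa) u <= 0 /\ 0 <= dot (vsub x pb) u).

Definition triple := (cdisc * cdisc * cdisc)%type.

Definition t1 (T : triple) : cdisc := fst (fst T).
Definition t2 (T : triple) : cdisc := snd (fst T).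
Definition t3 (T : triple) : cdisc := snd T.

Definition disc_of_triple (T : triple) (D : cdisc) : Prop :=
  D = t1 T \/ D = t2 T \/ D = t3 T.

Definition in_feasible (T : triple) (x : point) : Prop :=
  in_slab (t1 T) (t2 T) x /\ in_slab (t2 T) (t3 T) x /\ in_slab (t1 T) (t3 T) x.

Definition collinear (a b c : point) : Prop :=
  (fst b - fst a) * (snd c - snd a) - (snd b - snd a) * (fst c - fst a) = 0.

Definition noncollinear_centers (T : triple) : Prop :=
  ~ collinear (center (t1 T)) (center (t2 T)) (center (t3 T)).

(* Objective arc of D_i w.r.t. D_j, D_k: the minor arc of the boundary circle
   of D_i between the points where c_i c_j and c_i c_k cross it, i.e. the
   boundary points lying in the (convex, angle < pi) angular sector at c_i
   spanned by c_j - c_i and c_k - c_i. *)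
Definition on_objective_arc_of (Di Dj Dk : cdisc) (p : point) : Prop :=
  on_boundary Di p /\
  exists a b : R, 0 <= a /\ 0 <= b /\
    vsub p (center Di) =
      vadd (vscale a (vsub (center Dj) (center Di)))
           (vscale b (vsub (center Dk) (center Di))).

Definition on_objective_arc (T : triple) (p : point) : Prop :=
  on_objective_arc_of (t1 T) (t2 T) (t3 T) p \/
  on_objective_arc_of (t2 T) (t1 T) (t3 T) p \/
  on_objective_arc_of (t3 T) (t1 T) (t2 T) p.

Definition in_open_segment (q p x : point) : Prop :=
  exists t : R, 0 < t < 1 /\ x = vadd q (vscale t (vsub p q)).

(* Main.v *)
Require Import Defs.
From Stdlib Require Import Reals List Lra Psatz.
Require Import Defs.
Open Scope R_scope.

Lemma dot_self_nonneg u : 0 <= dot u u.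
Proof. destruct u; unfold dot; simpl; nra. Qed.

Lemma norm_nonneg u : 0 <= norm u.
Proof. unfold norm; apply sqrt_pos. Qed.

Lemma norm_sq u : norm u * norm u = dot u u.
Proof. unfold norm; apply sqrt_sqrt, dot_self_nonneg. Qed.

Lemma sq_le_le a b : 0 <= b -> a * a <= b * b -> a <= b.
Proof. intros; nra. Qed.

Lemma cauchy u v : dot u v <= norm u * norm v.
Proof.
  pose proof (norm_sq u); pose proof (norm_sq v);
  pose proof (norm_nonneg u); pose proof (norm_nonneg v).
  set (a := norm u) in *. set (b := norm v) in *.
  apply sq_le_le; [nra|].
  replace (a*b*(a*b)) with ((a*a)*(b*b)) by ring. rewrite H, H0.
  clear. destruct u as [u1 u2], v as [v1 v2]; unfold dot; simpl.
  assert (0 <= (u1*v2-u2*v1)*(u1*v2-u2*v1)) by apply Rle_0_sqr. nra.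
Qed.

Lemma dist_sym a b : dist a b = dist b a.
Proof.
  unfold dist, norm; f_equal. destruct a, b; unfold dot, vsub; simpl; ring.
Qed.

Lemma norm_le w r : 0 <= r -> dot w w <= r * r -> norm w <= r.
Proof. intros. apply sq_le_le; auto. rewrite norm_sq; auto. Qed.

Lemma disj_sep Da Db : 0 < radius Da -> 0 < radius Db -> discs_disjoint Da Db ->
  radius Da + radius Db < dist (center Db) (center Da).
Proof.
  intros ha hb hd.
  set (ra := radius Da) in *. set (rb := radius Db) in *.
  set (d := dist (center Db) (center Da)).
  destruct (Rlt_or_le (ra+rb) d) as [|Hle]; auto. exfalso.
  assert (hdn : 0 <= d) by apply norm_nonneg.
  assert (hdd : d * d = dot (vsub (center Db) (center Da)) (vsub (center Db) (center Da)))
    by apply norm_sq.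
  set (s := ra + rb) in *.
  set (t := ra / s).
  assert (hts : t * s = ra) by (unfold t, s; field; lra).
  assert (ht0 : 0 <= t) by (unfold t, s; apply Rmult_le_pos; [lra| left; apply Rinv_0_lt_compat; lra]).
  assert (ht1 : (1 - t) * s = rb) by (rewrite Rmult_minus_distr_r, Rmult_1_l, hts; unfold s; ring).
  assert (ht1' : 0 <= 1 - t) by nra.
  assert (hds : d * d <= s * s) by nra.
  set (u := vsub (center Db) (center Da)) in *.
  apply (hd (vadd (center Da) (vscale t u))).
  unfold in_closed_disc, dist; fold ra rb; split.
  - apply norm_le; [lra|].
    replace (dot (vsub (vadd (center Da) (vscale t u)) (center Da))
                 (vsub (vadd (center Da) (vscale t u)) (center Da)))
      with (t * t * dot u u)
      by (destruct (center Da), u; unfold dot, vsub, vadd, vscale; simpl; ring).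
    rewrite <- hdd. rewrite <- hts.
    assert (0 <= t*t) by nra. nra.
  - apply norm_le; [lra|].
    replace (dot (vsub (vadd (center Da) (vscale t u)) (center Db))
                 (vsub (vadd (center Da) (vscale t u)) (center Db)))
      with ((1-t) * (1-t) * dot u u)
      by (unfold u; destruct (center Da), (center Db); unfold dot, vsub, vadd, vscale; simpl; ring).
    rewrite <- hdd. rewrite <- ht1.
    assert (0 <= (1-t)*(1-t)) by nra. nra.
Qed.

Lemma slab_half Da Db x : 0 < radius Da -> 0 < radius Db ->
  radius Da + radius Db < dist (center Db) (center Da) -> in_slab Da Db x ->
  radius Da * dist (center Db) (center Da) <= dot (vsub x (center Da)) (vsub (center Db) (center Da)) /\
  radius Db * dist (center Db) (center Da) <= dot (vsub x (center Db)) (vsub (center Da) (center Db)).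
Proof.
  intros ha hb hs hsl.
  unfold in_slab, contact_point in hsl. rewrite (dist_sym (center Da)) in hsl.
  set (d := dist (center Db) (center Da)) in *.
  assert (hdd : d * d = dot (vsub (center Db) (center Da)) (vsub (center Db) (center Da)))
    by apply norm_sq.
  clearbody d.
  destruct Da as [[c1 c2] ra], Db as [[b1 b2] rb], x as [x1 x2].
  unfold dot, vsub, vadd, vscale in *; simpl in *.
  set (X := (x1-c1)*(b1-c1)+(x2-c2)*(b2-c2)).
  assert (E1 : (x1 - (c1 + ra / d * (b1 - c1))) * (b1 - c1) + (x2 - (c2 + ra / d * (b2 - c2))) * (b2 - c2) = X - ra * d).
  { replace (ra*d) with (ra/d*(d*d)) by (field; lra). rewrite hdd. unfold X; ring. }
  assert (E2 : (x1 - (b1 + rb / d * (c1 - b1))) * (b1 - c1) + (x2 - (b2 + rb / d * (c2 - b2))) * (b2 - c2) = X - d*d + rb * d).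
  { replace (rb*d) with (rb/d*(d*d)) by (field; lra). rewrite hdd. unfold X; ring. }
  rewrite E1, E2 in hsl.
  replace ((x1 - b1) * (c1 - b1) + (x2 - b2) * (c2 - b2)) with (d*d - X)
    by (rewrite hdd; unfold X; ring).
  fold X.
  destruct hsl as [[h1 h2]|[h1 h2]]; [split; lra|].
  exfalso. nra.
Qed.

Lemma half_not_int c w r y : 0 < norm w -> r * norm w <= dot (vsub y c) w -> r <= dist y c.
Proof.
  intros hw h. pose proof (cauchy (vsub y c) w). unfold dist.
  apply Rmult_le_reg_r with (norm w); auto. lra.
Qed.

Lemma seg_half c w k q p x : k <= dot (vsub q c) w -> k <= dot (vsub p c) w ->
  in_open_segment q p x -> k <= dot (vsub x c) w.
Proof.
  intros hq hp [t [ht ->]].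
  destruct c, w, q, p; unfold dot, vsub, vadd, vscale in *; simpl in *.
  replace ((r3 + t * (r5 - r3) - r) * r1 + (r4 + t * (r6 - r4) - r0) * r2) with
    ((1-t) * ((r3 - r) * r1 + (r4 - r0) * r2) + t * ((r5 - r) * r1 + (r6 - r0) * r2)) by ring.
  nra.
Qed.

Lemma comb_norm a b u v : 0 <= a -> 0 <= b ->
  norm (vadd (vscale a u) (vscale b v)) <= a * norm u + b * norm v.
Proof.
  intros ha hb.
  pose proof (norm_nonneg u); pose proof (norm_nonneg v).
  apply sq_le_le; [nra|]. rewrite norm_sq.
  pose proof (cauchy u v). pose proof (norm_sq u). pose proof (norm_sq v).
  replace (dot (vadd (vscale a u) (vscale b v)) (vadd (vscale a u) (vscale b v)))
    with (a*a*dot u u + 2*(a*b)*dot u v + b*b*dot v v)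
    by (destruct u, v; unfold dot, vadd, vscale; simpl; ring).
  assert (0 <= a*b) by nra.
  rewrite <- H2, <- H3. nra.
Qed.

Lemma other_disc A B q p x :
  0 < radius A -> 0 < radius B -> radius A + radius B < dist (center B) (center A) ->
  radius B * dist (center B) (center A) <= dot (vsub q (center B)) (vsub (center A) (center B)) ->
  on_boundary A p -> in_open_segment q p x -> ~ in_interior B x.
Proof.
  intros ha hb hd hq hp hs.
  unfold in_interior.
  assert (e : dist (center A) (center B) = dist (center B) (center A)) by apply dist_sym.
  set (d := dist (center B) (center A)) in *.
  assert (hdd : d * d = dot (vsub (center A) (center B)) (vsub (center A) (center B)))
    by (rewrite <- e; apply norm_sq).
  pose proof (cauchy (vsub p (center A)) (vsub (center B) (center A))).
  unfold on_boundary, dist in hp. rewrite hp in H. fold (dist (center B) (center A)) in H. fold d in H.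
  assert (hpB : radius B * d <= dot (vsub p (center B)) (vsub (center A) (center B))).
  { replace (dot (vsub p (center B)) (vsub (center A) (center B))) with
      (- dot (vsub p (center A)) (vsub (center B) (center A)) +
        dot (vsub (center A) (center B)) (vsub (center A) (center B)))
      by (destruct p, (center A), (center B); unfold dot, vsub; simpl; ring).
    rewrite <- hdd. nra. }
  pose proof (seg_half _ _ _ _ _ _ hq hpB hs).
  assert (radius B <= dist x (center B)).
  { apply (half_not_int _ (vsub (center A) (center B))); [fold (dist (center A) (center B)); lra|].
    fold (dist (center A) (center B)). rewrite e. auto. }
  lra.
Qed.

Lemma own_disc A B C q p x :
  0 < radius A ->
  radius A * dist (center B) (center A) <= dot (vsub q (center A)) (vsub (center B) (center A)) ->
  radius A * dist (center C) (center A) <= dot (vsub q (center A)) (vsub (center C) (center A)) ->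
  on_objective_arc_of A B C p -> in_open_segment q p x -> ~ in_interior A x.
Proof.
  intros ha hqb hqc [hp [a [b [h0a [h0b hP]]]]] hs.
  unfold in_interior.
  assert (hn := comb_norm a b (vsub (center B) (center A)) (vsub (center C) (center A)) h0a h0b).
  rewrite <- hP in hn. unfold on_boundary, dist in hp. rewrite hp in hn.
  fold (dist (center B) (center A)) (dist (center C) (center A)) in hn.
  assert (hPQ : radius A * radius A <= dot (vsub q (center A)) (vsub p (center A))).
  { rewrite hP.
    replace (dot (vsub q (center A)) (vadd (vscale a (vsub (center B) (center A))) (vscale b (vsub (center C) (center A)))))
      with (a * dot (vsub q (center A)) (vsub (center B) (center A)) + b * dot (vsub q (center A)) (vsub (center C) (center A)))
      by (destruct q, (center A), (center B), (center C); unfold dot, vsub, vadd, vscale; simpl; ring).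
    nra. }
  assert (hPP : dot (vsub p (center A)) (vsub p (center A)) = radius A * radius A)
    by (rewrite <- norm_sq; unfold norm, dist in *; rewrite hp; auto).
  assert (radius A * radius A <= dot (vsub x (center A)) (vsub x (center A))).
  { destruct hs as [t [ht ->]]. clear -hPQ hPP ht.
    destruct q as [q1 q2], p as [p1 p2], (center A) as [c1 c2].
    unfold dot, vsub, vadd, vscale in *; simpl in *.
    set (P1 := p1 - c1) in *. set (P2 := p2 - c2) in *.
    set (Q1 := q1 - c1) in *. set (Q2 := q2 - c2) in *.
    replace ((q1 + t * (p1 - q1) - c1) * (q1 + t * (p1 - q1) - c1) +
             (q2 + t * (p2 - q2) - c2) * (q2 + t * (p2 - q2) - c2)) with
      ((P1*P1+P2*P2) + 2*(1-t)*((Q1*P1+Q2*P2) - (P1*P1+P2*P2)) +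
        (1-t)*(1-t)*((Q1-P1)*(Q1-P1)+(Q2-P2)*(Q2-P2)))
      by (unfold P1, P2, Q1, Q2; ring).
    assert (0 <= (1-t)*(1-t)*((Q1-P1)*(Q1-P1)+(Q2-P2)*(Q2-P2))).
    { apply Rmult_le_pos; [nra|]. apply Rplus_le_le_0_compat; apply Rle_0_sqr. }
    nra. }
  pose proof (norm_sq (vsub x (center A))). pose proof (norm_nonneg (vsub x (center A))).
  unfold dist. nra.
Qed.

Lemma pair_facts A B q : 0 < radius A -> 0 < radius B -> discs_disjoint A B -> in_slab A B q ->
  radius A + radius B < dist (center B) (center A) /\
  radius B + radius A < dist (center A) (center B) /\
  radius A * dist (center B) (center A) <= dot (vsub q (center A)) (vsub (center B) (center A)) /\
  radius B * dist (center B) (center A) <= dot (vsub q (center B)) (vsub (center A) (center B)) /\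
  radius A * dist (center A) (center B) <= dot (vsub q (center A)) (vsub (center B) (center A)) /\
  radius B * dist (center A) (center B) <= dot (vsub q (center B)) (vsub (center A) (center B)).
Proof.
  intros ha hb hd hs.
  pose proof (disj_sep A B ha hb hd) as hsep.
  destruct (slab_half A B q ha hb hsep hs) as [h1 h2].
  rewrite (dist_sym (center A) (center B)). repeat split; lra.
Qed.

Lemma noncol_neq12 T : noncollinear_centers T -> t1 T <> t2 T.
Proof. intros h e; apply h; unfold collinear; rewrite e; ring. Qed.
Lemma noncol_neq23 T : noncollinear_centers T -> t2 T <> t3 T.
Proof. intros h e; apply h; unfold collinear; rewrite e; ring. Qed.
Lemma noncol_neq13 T : noncollinear_centers T -> t1 T <> t3 T.
Proof. intros h e; apply h; unfold collinear; rewrite e; ring. Qed.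

Theorem corollary1 (C : list cdisc) (Ts : list triple) :
  (forall D, In D C -> 0 < radius D) ->
  (forall D1 D2, In D1 C -> In D2 C -> D1 <> D2 -> discs_disjoint D1 D2) ->
  (forall T, In T Ts ->
     In (t1 T) C /\ In (t2 T) C /\ In (t3 T) C /\ noncollinear_centers T) ->
  forall q : point, (forall T, In T Ts -> in_feasible T q) ->
  forall T, In T Ts ->
  forall p : point, on_objective_arc T p ->
  forall D, disc_of_triple T D ->
  forall x : point, in_open_segment q p x -> ~ in_interior D x.
Proof.
  intros hr hdisj hT q hq T hin p hp D hD x hs.
  destruct (hT T hin) as [i1 [i2 [i3 hnc]]].
  destruct (hq T hin) as [s12 [s23 s13]].
  pose proof (hr _ i1) as r1. pose proof (hr _ i2) as r2. pose proof (hr _ i3) as r3.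
  destruct (pair_facts _ _ q r1 r2 (hdisj _ _ i1 i2 (noncol_neq12 T hnc)) s12)
    as [a1 [a2 [a3 [a4 [a5 a6]]]]].
  destruct (pair_facts _ _ q r2 r3 (hdisj _ _ i2 i3 (noncol_neq23 T hnc)) s23)
    as [b1 [b2 [b3 [b4 [b5 b6]]]]].
  destruct (pair_facts _ _ q r1 r3 (hdisj _ _ i1 i3 (noncol_neq13 T hnc)) s13)
    as [c1 [c2 [c3 [c4 [c5 c6]]]]].
  destruct hp as [hp|[hp|hp]]; pose proof hp as [hb _];
  destruct hD as [ -> | [ -> | -> ] ].
  - exact (own_disc _ _ _ q p x r1 a3 c3 hp hs).
  - exact (other_disc _ _ q p x r1 r2 a1 a4 hb hs).
  - exact (other_disc _ _ q p x r1 r3 c1 c4 hb hs).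
  - exact (other_disc _ _ q p x r2 r1 a2 a5 hb hs).
  - exact (own_disc _ _ _ q p x r2 a6 b3 hp hs).
  - exact (other_disc _ _ q p x r2 r3 b1 b4 hb hs).
  - exact (other_disc _ _ q p x r3 r1 c2 c5 hb hs).
  - exact (other_disc _ _ q p x r3 r2 b2 b5 hb hs).
  - exact (own_disc _ _ _ q p x r3 c6 b6 hp hs).
Qed.
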